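(* Let $\nu$ be a bounded continuous valuation on $\mathbb N_{\rm cof}$. Then there exist a discrete valuation $\alpha$ on $\mathbb N_{\rm cof}$ and a nonnegative real number $r$ such that $\nu=\alpha+r\beta$, where $\beta(U)=1$ for every non-empty open $U\subseteq\mathbb N_{\rm cof}$ and $\beta(\emptyset)=0$.
   Context: $\mathbb N_{\rm cof}$ is the set of natural numbers with the cofinite topology (open sets are $\emptyset$ and the complements of finite sets). A valuation on a space $X$ is a map $\nu:\mathcal OX\to[0,\infty]$ with $\nu(\emptyset)=0$, monotone and modular; continuous if it preserves directed suprema of opens; bounded if $\nu(X)<\infty$. A discrete valuation is one of the form $\sum_{i=1}^\infty r_i\delta_{x_i}$ ($r_i\in[0,\infty)$, $\delta_x$ the Dirac valuation at $x$), the supremum of its partial sums. *)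

(* Defs.v *)
From HB Require Import structures.
From mathcomp Require Import all_boot all_order all_algebra.
From mathcomp Require Import boolp classical_sets functions cardinality reals constructive_ereal ereal.
Set Implicit Arguments. Unset Strict Implicit. Unset Printing Implicit Defensive.
Import Order.TTheory GRing.Theory Num.Theory.
Local Open Scope classical_set_scope.
Local Open Scope ring_scope.
Local Open Scope ereal_scope.

Definition cof_open (U : set nat) : Prop := U = set0 \/ finite_set (~` U).

Definition cof_directed (D : set (set nat)) : Prop :=
  (D `<=` cof_open) /\ (exists U, D U) /\
  (forall U V, D U -> D V -> exists W, D W /\ U `<=` W /\ V `<=` W).

(* A valuation on N_cof with values in [0, +oo]; only its values on opens matter. *)
Definition valuation (R : realType) (nu : set nat -> \bar R) : Prop :=
  nu set0 = 0 /\
  (forall U, cof_open U -> 0 <= nu U) /\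
  (forall U V, cof_open U -> cof_open V -> U `<=` V -> nu U <= nu V) /\
  (forall U V, cof_open U -> cof_open V ->
     nu U + nu V = nu (U `|` V) + nu (U `&` V)).

Definition continuous_valuation (R : realType) (nu : set nat -> \bar R) : Prop :=
  valuation nu /\
  (forall D, cof_directed D -> nu (\bigcup_(U in D) U) = ereal_sup (nu @` D)).

Definition bounded_valuation (R : realType) (nu : set nat -> \bar R) : Prop :=
  nu setT < +oo.

Definition dirac_val (R : realType) (x : nat) (U : set nat) : \bar R :=
  if `[< U x >] then 1 else 0.

(* sum_{i>=1} r_i delta_{x_i} (indexed from 0 here), as the supremum of its
   partial sums. *)
Definition disc_sum (R : realType) (r : nat -> R) (x : nat -> nat)
    (U : set nat) : \bar R :=
  ereal_sup (range (fun n => \sum_(i < n) ((r i)%:E * dirac_val R (x i) U))).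

Definition discrete_valuation (R : realType) (alpha : set nat -> \bar R) : Prop :=
  exists (r : nat -> R) (x : nat -> nat),
    (forall i, (0 <= r i)%R) /\
    (forall U, cof_open U -> alpha U = disc_sum r x U).

Definition beta_val (R : realType) (U : set nat) : \bar R :=
  if `[< U = set0 >] then 0 else 1.

(* Main.v *)
Require Import Defs.
From HB Require Import structures.
From mathcomp Require Import all_boot all_order all_algebra.
From mathcomp Require Import boolp classical_sets functions cardinality reals constructive_ereal ereal.
From mathcomp Require Import ring lra.
Import Order.TTheory GRing.Theory Num.Theory.
Local Open Scope classical_set_scope.
Local Open Scope ring_scope.
Local Open Scope ereal_scope.

Lemma open_bnd (U : set nat) n : (forall i, ~ U i -> (i < n)%N) -> cof_open U.
Proof.
move=> H; right; apply: (sub_finite_set _ (finite_II n)) => i /= /H //.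
Qed.

Lemma nuE (R : realType) (nu : set nat -> \bar R) : valuation nu -> nu setT < +oo ->
  forall U, cof_open U -> nu U = (fine (nu U))%:E.
Proof.
rewrite /valuation => -[h0 [hpos [hmono hmod]]] hb U hU.
have hT : cof_open setT by apply: (@open_bnd _ 0) => i /(_ I).
rewrite fineK // ge0_fin_numE; last exact: hpos.
apply: le_lt_trans hb; exact: hmono.
Qed.

Lemma sum_mono (R : realType) (f : nat -> R) m j : (forall i, 0 <= f i)%R ->
  (\sum_(i < m) f i <= \sum_(i < m + j) f i)%R.
Proof.
move=> f0; elim: j => [|j IH]; first by rewrite addn0.
rewrite addnS big_ord_recr /=; apply: (le_trans IH); rewrite lerDl; exact: f0.
Qed.

Definition Sin {R : realType} (a : nat -> R) n (U : set nat) : R :=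
  (\sum_(i < n) (if `[< U i >] then a i else 0))%R.

Lemma Sin_shift (R : realType) (a : nat -> R) n m (U : set nat) :
  (forall i, ~ U i -> (i < n)%N) ->
  Sin a (n + m) U = (Sin a n U + (\sum_(i < n + m) a i - \sum_(i < n) a i))%R.
Proof.
move=> H; elim: m => [|m IH]; first by rewrite addn0 subrr addr0.
rewrite /Sin addnS !big_ord_recr /= -/(Sin a (n + m) U) IH.
have Um : U (n + m)%N.
  by apply: contrapT => /H; rewrite ltnNge leq_addr.
rewrite asboolT // /Sin; ring.
Qed.

Definition aa {R : realType} (nu : set nat -> \bar R) (i : nat) : R :=
  (fine (nu setT) - fine (nu (~` [set i])))%R.

Lemma key (R : realType) (nu : set nat -> \bar R) : valuation nu -> nu setT < +oo ->
  forall n U, (forall i, ~ U i -> (i < n)%N) ->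
  fine (nu U) = (fine (nu setT) - \sum_(i < n) aa nu i + Sin (aa nu) n U)%R.
Proof.
move=> hv hb; have [h0 [hpos [hmono hmod]]] := hv.
set N := fine (nu setT); set a := aa nu.
elim => [|n IH] U H.
  have -> : U = setT by apply/seteqP; split => // x _; apply: contrapT => /H.
  by rewrite /Sin !big_ord0 subr0 addr0.
rewrite /Sin big_ord_recr big_ord_recr /= -/(Sin a n U).
case: (pselect (U n)) => Un.
  rewrite IH; last first.
    move=> i Ui; have := H i Ui; rewrite ltnS leq_eqVlt => /orP[/eqP ei|//].
    by subst i.
  rewrite asboolT //; lra.
set V := U `|` [set n].
have HV : forall i, ~ V i -> (i < n)%N.
  move=> i Vi; have := H i (fun u => Vi (or_introl u)).
  rewrite ltnS leq_eqVlt => /orP[/eqP ei|//]; subst i; exfalso; apply: Vi; by right.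
have SV : Sin a n V = Sin a n U.
  apply: eq_bigr => i _; case: (pselect (U i)) => Ui.
    by rewrite !asboolT //; left.
  rewrite !asboolF //; case => // ei; move: (ltn_ord i); by rewrite ei ltnn.
have := IH V HV; rewrite SV => eV.
set W := ~` [set n].
have oV : cof_open V by apply: (@open_bnd _ _ HV).
have oW : cof_open W.
  by apply: (@open_bnd _ n.+1) => i /= /contrapT ->.
have oU : cof_open U by apply: (@open_bnd _ _ H).
have oT : cof_open setT by apply: (@open_bnd _ 0) => i /(_ I).
have := hmod V W oV oW.
have -> : V `|` W = setT.
  apply/seteqP; split => // x _ /=; case: (pselect (x = n)) => xn; [left; right|right] => //.
have -> : V `&` W = U.
  apply/seteqP; split => x /=.
    by move=> [[//|xn] /(_ xn)].
  by move=> Ux; split; [left|move=> xn; apply: Un; rewrite -xn].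
rewrite (nuE _ _ hv hb _ oV) (nuE _ _ hv hb _ oW) (nuE _ _ hv hb _ oT) (nuE _ _ hv hb _ oU) -!EFinD.
move=> [] e; rewrite asboolF //.
have : fine (nu U) = (fine (nu V) + fine (nu W) - N)%R by rewrite /N e; ring.
move=> ->; rewrite eV /a /aa /W -/N /=; lra.
Qed.

Theorem proposition3p2 (R : realType) (nu : set nat -> \bar R) :
  continuous_valuation nu -> bounded_valuation nu ->
  exists (alpha : set nat -> \bar R) (r : R),
    discrete_valuation alpha /\ (0 <= r)%R /\
    (forall U, cof_open U -> nu U = alpha U + r%:E * beta_val R U).
Proof.
move=> [hv _] hb; have [h0 [hpos [hmono hmod]]] := hv.
have oT : cof_open setT by apply: (@open_bnd _ 0) => i /(_ I).
set N := fine (nu setT).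
set a := aa nu.
set A := fun n => (\sum_(i < n) a i)%R.
have a0 : forall i, (0 <= a i)%R.
  move=> i; rewrite /a /aa subr_ge0.
  have oW : cof_open (~` [set i]) by apply: (@open_bnd _ i.+1) => j /contrapT ->.
  have := hmono _ _ oW oT (@subsetT _ _).
  by rewrite (nuE _ _ hv hb _ oW) (nuE _ _ hv hb _ oT) lee_fin.
have AN : forall n, (A n <= N)%R.
  move=> n.
  have H : forall i, ~ [set i | (n <= i)%N] i -> (i < n)%N by move=> i ni; rewrite ltnNge; apply/negP.
  have := key _ _ hv hb n _ H.
  have -> : Sin (aa nu) n [set i | (n <= i)%N] = 0%R.
    apply: big1 => i _; rewrite asboolF //= => ni; move: (ltn_ord i); by rewrite ltnNge ni.
  have : (0 <= fine (nu [set i | (n <= i)%N]))%R by apply: fine_ge0; apply: hpos; exact: (@open_bnd _ _ H).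
  rewrite /A /a -/N; lra.
have hs : has_sup (range A).
  split; first by exists (A 0%N), 0%N.
  by exists N => _ [m _ <-].
set s := sup (range A).
have As : forall n, (A n <= s)%R by move=> n; apply: sup_upper_bound => //; exists n.
have sN : (s <= N)%R by apply: ge_sup; [exists (A 0%N), 0%N | move=> _ [m _ <-]].
exists (disc_sum a id), (N - s)%R; split.
  by exists a, id; split.
split; first lra.
move=> U [->|fin].
  rewrite h0 /beta_val asboolT // mule0 adde0.
  have E : forall m, \sum_(i < m) ((a i)%:E * dirac_val R (id i) set0) = 0.
    by move=> m; apply: big1 => i _; rewrite /dirac_val asboolF // mule0.
  apply/eqP; rewrite eq_le; apply/andP; split.
    by apply: ereal_sup_ubound; exists 0%N => //; rewrite E.
  by apply: ge_ereal_sup => _ [m _ <-]; rewrite E.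
have [sq esq] := (iffLR (finite_seqP _)) fin.
set n := (\max_(x <- sq) x).+1.
have H : forall i, ~ U i -> (i < n)%N.
  move=> i Ui; have : (~` U) i by [].
  rewrite esq /= => iin; rewrite ltnS; exact: (@leq_bigmax_seq _ sq xpredT (fun x => x) i iin isT).
have Un : U n by apply: contrapT => /H; rewrite ltnn.
have oU : cof_open U by right.
rewrite /beta_val asboolF; last by move=> U0; rewrite U0 in Un.
rewrite mule1.
have dE : disc_sum a id U = ereal_sup (range (fun m => (Sin a m U)%:E)).
  have E : forall m, \sum_(i < m) ((a i)%:E * dirac_val R (id i) U) = (Sin a m U)%:E.
    move=> m; rewrite /Sin -sumEFin; apply: eq_bigr => i _; rewrite /dirac_val /=.
    by case: asboolP => _; rewrite ?mule1 ?mule0.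
  rewrite /disc_sum; congr ereal_sup; apply/seteqP; split => _ [m _ <-]; exists m => //; by rewrite E.
have Sm : forall m, (Sin a m U <= Sin a (m + n) U)%R.
  move=> m; rewrite /Sin; apply: (@sum_mono R (fun i => if `[< U i >] then a i else 0%R)) => i; case: asboolP => _ //.
have SS : forall k, Sin a (n + k) U = (Sin a n U + (A (n + k)%N - A n))%R.
  by move=> k; apply: Sin_shift.
set T := ereal_sup (range (fun m => (Sin a m U)%:E)).
have Tle : T <= (Sin a n U - A n + s)%:E.
  apply: ge_ereal_sup => _ [m _ <-]; rewrite lee_fin.
  have := Sm m; rewrite addnC SS; have := As (n + m)%N; lra.
have T0 : 0 <= T.
  by apply: ereal_sup_ubound; exists 0%N => //; rewrite /Sin big_ord0.
have Tfin : T \is a fin_num.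
  by rewrite ge0_fin_numE // (le_lt_trans Tle) // ltry.
have Tge : (s <= fine T - Sin a n U + A n)%R.
  apply: ge_sup; first by exists (A 0%N), 0%N.
  move=> _ [k _ <-].
  have : (Sin a (n + k) U)%:E <= T by apply: ereal_sup_ubound; exists (n + k)%N.
  rewrite -(fineK Tfin) lee_fin SS.
  have : (A k <= A (k + n))%R by apply: sum_mono.
  rewrite addnC; lra.
have TE : T = (Sin a n U - A n + s)%:E.
  apply/eqP; rewrite eq_le Tle /= -(fineK Tfin) lee_fin; lra.
rewrite dE -/T TE (nuE _ _ hv hb _ oU) (key _ _ hv hb n _ H) -EFinD.
congr EFin; rewrite -/N -/a /A; lra.
Qed.
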